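(* Let $X$ be a metric space, $A\in\mathscr{A}(X)$, and suppose $1\le n:=\mathrm{rk}(A)<\infty$. Then the difference of any two elements of $H(A)$ is uniformly bounded on $X$, so the sup norm $\|g-h\|_\infty$ defines a metric on $H(A)$, and there exists an affine isometry from $H(A)$ onto $l^n_\infty$. In particular $H(A)$ is injective.
   Context: For $f\colon X\to\mathbb{R}$, $A(f)$ denotes the set of unordered pairs $\{x,y\}$ of points of $X$ ($x=y$ allowed) with $f(x)+f(y)=d(x,y)$. $\Delta(X)=\{f: f(x)+f(y)\ge d(x,y)\ \forall x,y\}$, $\mathrm{E}'(X)=\{f\in\Delta(X): \bigcup A(f)=X\}$, and $\mathscr{A}(X)=\{A(f): f\in\mathrm{E}'(X)\}$. For $A\in\mathscr A(X)$, $H(A)=\{g\in\mathbb{R}^X: g(x)+g(y)=d(x,y)\ \forall\{x,y\}\in A\}$ (an affine subspace of $\mathbb{R}^X$) and $\mathrm{rk}(A)=\dim H(A)\in\{0,1,2,\dots\}\cup\{\infty\}$. A metric space is injective if every 1-Lipschitz map into it from a subset of a metric space extends 1-Lipschitz to the whole space. *)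

(* Defs.v *)
From HB Require Import structures.
From mathcomp Require Import all_boot all_order all_algebra.
From mathcomp Require Import all_classical all_reals.
From mathcomp Require Import Rstruct.
Set Implicit Arguments. Unset Strict Implicit. Unset Printing Implicit Defensive.
Import Order.TTheory GRing.Theory Num.Theory.
Local Open Scope ring_scope.

Notation R := Rdefinitions.R.

Definition is_metric_on (T : Type) (S : T -> Prop) (D : T -> T -> R) : Prop :=
  (forall x y, S x -> S y -> 0 <= D x y) /\
  (forall x y, S x -> S y -> (D x y = 0 <-> x = y)) /\
  (forall x y, S x -> S y -> D x y = D y x) /\
  (forall x y z, S x -> S y -> S z -> D x z <= D x y + D y z).

Definition is_metric (X : Type) (d : X -> X -> R) : Prop :=
  is_metric_on (fun _ => True) d.

Definition in_Delta (X : Type) (d : X -> X -> R) (f : X -> R) : Prop :=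
  forall x y, d x y <= f x + f y.

(* A(f), as a (symmetric) relation: {x,y} in A(f) iff f x + f y = d x y *)
Definition Aset (X : Type) (d : X -> X -> R) (f : X -> R) : X -> X -> Prop :=
  fun x y => f x + f y = d x y.

(* E'(X) : f in Delta(X) and the union of A(f) is X *)
Definition in_E' (X : Type) (d : X -> X -> R) (f : X -> R) : Prop :=
  in_Delta d f /\ forall x, exists y, Aset d f x y.

Definition in_scrA (X : Type) (d : X -> X -> R) (A : X -> X -> Prop) : Prop :=
  exists f, in_E' d f /\ A = Aset d f.

Definition HA (X : Type) (d : X -> X -> R) (A : X -> X -> Prop) (g : X -> R)
  : Prop := forall x y, A x y -> g x + g y = d x y.

Definition affine_dim (X : Type) (S : (X -> R) -> Prop) (n : nat) : Prop :=
  exists (h0 : X -> R) (b : 'I_n -> X -> R),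
    (forall c : 'I_n -> R, (forall x, \sum_(i < n) c i * b i x = 0) ->
        forall i, c i = 0) /\
    (forall g, S g <-> exists c : 'I_n -> R,
        forall x, g x = h0 x + \sum_(i < n) c i * b i x).

Definition rk_eq (X : Type) (d : X -> X -> R) (A : X -> X -> Prop) (n : nat)
  : Prop := affine_dim (HA d A) n.

Definition supdist (X : Type) (g h : X -> R) : R :=
  sup [set `|g x - h x| | x in [set: X]].

Definition linf_dist (n : nat) (u v : 'I_n -> R) : R :=
  \big[Num.max/0]_(i < n) `|u i - v i|.

Definition affine_isometry_onto (X : Type) (S : (X -> R) -> Prop)
  (D : (X -> R) -> (X -> R) -> R) (n : nat) (F : (X -> R) -> ('I_n -> R))
  : Prop :=
  (forall g h (t : R), S g -> S h ->
     F (fun x => t * g x + (1 - t) * h x) = (fun i => t * F g i + (1 - t) * F h i)) /\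
  (forall g h, S g -> S h -> linf_dist (F g) (F h) = D g h) /\
  (forall v : 'I_n -> R, exists g, S g /\ F g = v).

Definition injective_metric (T : Type) (S : T -> Prop) (D : T -> T -> R) : Prop :=
  forall (Y : Type) (dY : Y -> Y -> R) (Z : Y -> Prop) (phi : Y -> T),
    is_metric dY ->
    (forall z, Z z -> S (phi z)) ->
    (forall z z', Z z -> Z z' -> D (phi z) (phi z') <= dY z z') ->
    exists psi : Y -> T,
      (forall y, S (psi y)) /\
      (forall y y', D (psi y) (psi y') <= dY y y') /\
      (forall z, Z z -> psi z = phi z).

(* Main.v *)
Require Import Defs.
From mathcomp Require Import all_boot all_order all_algebra.
From mathcomp Require Import all_classical all_reals.
From mathcomp Require Import Rstruct.
From mathcomp Require Import ring lra zify.
Import Order.TTheory GRing.Theory Num.Theory.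
Local Open Scope ring_scope.
Set Implicit Arguments. Unset Strict Implicit. Unset Printing Implicit Defensive.

Definition Lsp (X : Type) (A : X -> X -> Prop) (u : X -> R) : Prop :=
  forall x y, A x y -> u x + u y = 0.

Inductive conn (X : Type) (A : X -> X -> Prop) : X -> X -> Prop :=
| conn_refl x : conn A x x
| conn_step x y z : conn A x y -> A y z -> conn A x z.

Lemma conn_trans (X : Type) (A : X -> X -> Prop) x y z :
  conn A x y -> conn A y z -> conn A x z.
Proof.
move=> hxy hyz; elim: hyz hxy => // a b c _ IH hbc hxa.
exact: conn_step (IH hxa) hbc.
Qed.

Lemma conn_sym (X : Type) (A : X -> X -> Prop) :
  (forall x y, A x y -> A y x) -> forall x y, conn A x y -> conn A y x.
Proof.
move=> As x y; elim => [a|a b c _ IH hbc]; first exact: conn_refl.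
exact: conn_trans (conn_step (conn_refl _ _) (As _ _ hbc)) IH.
Qed.

Definition cmask (X : Type) (A : X -> X -> Prop) (x : X) (u : X -> R) : X -> R :=
  fun y => if pselect (conn A x y) then u y else 0.

Lemma cmask_L (X : Type) (A : X -> X -> Prop) x u :
  (forall x y, A x y -> A y x) -> Lsp A u -> Lsp A (cmask A x u).
Proof.
move=> As hu y z hyz; rewrite /cmask.
case: pselect => cy; case: pselect => cz.
- exact: hu.
- by exfalso; apply: cz; apply: conn_step cy hyz.
- by exfalso; apply: cy; apply: conn_step cz (As _ _ hyz).
- by rewrite addr0.
Qed.

Lemma cmask_in (X : Type) (A : X -> X -> Prop) x u y :
  conn A x y -> cmask A x u y = u y.
Proof. by rewrite /cmask; case: pselect. Qed.

Lemma cmask_out (X : Type) (A : X -> X -> Prop) x u y :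
  ~ conn A x y -> cmask A x u y = 0.
Proof. by rewrite /cmask; case: pselect. Qed.

Lemma conn_sign (X : Type) (A : X -> X -> Prop) x y :
  conn A x y -> exists s : R, (s = 1 \/ s = -1) /\
    forall u, Lsp A u -> u y = s * u x.
Proof.
elim => [a|a b c _ [s [hs IH]] hbc].
  by exists 1; split; [left|move=> u _; rewrite mul1r].
exists (- s); split; first by case: hs => ->; [right|left; rewrite opprK].
move=> u hu; have := hu _ _ hbc; rewrite (IH u hu) => h.
apply/eqP; rewrite -subr_eq0 -h; apply/eqP; ring.
Qed.

Lemma Lsp_scale (X : Type) (A : X -> X -> Prop) (a : R) u :
  Lsp A u -> Lsp A (fun x => a * u x).
Proof. by move=> hu x y hxy; rewrite -mulrDr hu // mulr0. Qed.

Lemma Lsp_sub (X : Type) (A : X -> X -> Prop) u v :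
  Lsp A u -> Lsp A v -> Lsp A (fun x => u x - v x).
Proof.
move=> hu hv x y hxy; have := hu _ _ hxy; have := hv _ _ hxy => h1 h2.
by rewrite addrACA -opprD h1 h2 subr0.
Qed.

Lemma Lsp_sum (X : Type) (A : X -> X -> Prop) m (a : 'I_m -> R) (w : 'I_m -> X -> R) :
  (forall i, Lsp A (w i)) -> Lsp A (fun x => \sum_(i < m) a i * w i x).
Proof.
move=> hw x y hxy; rewrite -big_split /=; apply: big1 => i _.
by rewrite -mulrDr hw // mulr0.
Qed.

Lemma kernel_fun k m (M : 'I_k -> 'I_m -> R) : (k < m)%N ->
  exists c : 'I_m -> R, (exists i, c i != 0) /\
    forall j, \sum_(i < m) M j i * c i = 0.
Proof.
move=> km.
pose Mt : 'M[R]_(m, k) := \matrix_(i, j) M j i.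
have := mulmx_ker Mt; have := mxrank_ker Mt.
move: (kermx Mt) => K rKe hKM.
have rK : (0 < \rank K)%N.
  rewrite rKe; have := rank_leq_col Mt; lia.
have [i0 [j0 hK]] : exists i0 j0, K i0 j0 != 0.
  apply: contrapT => hne; move: rK.
  suff -> : K = 0 by rewrite mxrank0.
  apply/matrixP => i j; rewrite [RHS]mxE.
  case: (eqVneq (K i j) 0) => // h; by exfalso; apply: hne; exists i, j.
exists (fun i => K i0 i); split; first by exists j0.
move=> j; have := congr1 (fun B : 'M[R]_(m, k) => B i0 j) hKM.
rewrite /= !mxE => h; rewrite -[RHS]h.
by apply: eq_bigr => i _; rewrite /Mt mxE mulrC.
Qed.


Lemma vanish (X : Type) (A : X -> X -> Prop) n (b : 'I_n -> X -> R) :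
  (forall c : 'I_n -> R, (forall x, \sum_(i < n) c i * b i x = 0) -> forall i, c i = 0) ->
  (forall c : 'I_n -> R, Lsp A (fun x => \sum_(i < n) c i * b i x)) ->
  forall k (p : 'I_k -> X), (k < n)%N ->
  exists u, Lsp A u /\ (exists x, u x != 0) /\ forall j, u (p j) = 0.
Proof.
move=> hind hL k p kn.
have [c [[i0 ci0] hc]] := kernel_fun (fun j i => b i (p j)) kn.
exists (fun x => \sum_(i < n) c i * b i x); split; first exact: hL.
split; last first.
  by move=> j; rewrite -[RHS](hc j); apply: eq_bigr => i _; rewrite mulrC.
apply: contrapT => hne; move/eqP: ci0; apply; apply: hind => x.
by case: (eqVneq (\sum_(i < n) c i * b i x) 0) => // h; exfalso; apply: hne; exists x.
Qed.

Lemma dep (X : Type) (A : X -> X -> Prop) n (b : 'I_n -> X -> R) :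
  (forall u, Lsp A u -> exists c : 'I_n -> R, forall x, u x = \sum_(i < n) c i * b i x) ->
  forall w : 'I_n.+1 -> X -> R, (forall j, Lsp A (w j)) ->
  exists a : 'I_n.+1 -> R, (exists j, a j != 0) /\
    forall x, \sum_(j < n.+1) a j * w j x = 0.
Proof.
move=> hL w hw.
have [C hC] := choice (fun j => hL _ (hw j)).
have [a [ha hsum]] := kernel_fun (fun i j => C j i) (ltnSn n).
exists a; split => // x.
under eq_bigr => j _ do rewrite hC mulr_sumr.
rewrite exchange_big /=; apply: big1 => i _.
transitivity (b i x * \sum_(j < n.+1) C j i * a j); last by rewrite hsum mulr0.
by rewrite mulr_sumr; apply: eq_bigr => j _; ring.
Qed.


Lemma not_conn_zero (X : Type) (A : X -> X -> Prop) u x y :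
  Lsp A u -> u x != 0 -> u y = 0 -> ~ conn A x y.
Proof.
move=> hu hx hy c; have [s [hs hsu]] := conn_sign c.
move: (hsu u hu); rewrite hy => /esym /eqP; rewrite mulf_eq0 (negbTE hx) orbF.
by case: hs => ->; rewrite ?oppr_eq0 oner_eq0.
Qed.

Lemma greedy (X : Type) (A : X -> X -> Prop) n (b : 'I_n -> X -> R) :
  (forall c : 'I_n -> R, (forall x, \sum_(i < n) c i * b i x = 0) -> forall i, c i = 0) ->
  (forall c : 'I_n -> R, Lsp A (fun x => \sum_(i < n) c i * b i x)) ->
  (forall x y, A x y -> A y x) -> forall x0 : X,
  forall k, (k <= n)%N -> exists p : nat -> X,
    (forall i j, (i < k)%N -> (j < k)%N -> i <> j -> ~ conn A (p i) (p j)) /\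
    (forall i, (i < k)%N -> exists v, Lsp A v /\ v (p i) != 0).
Proof.
move=> hind hL As x0; elim => [|k IH] kn.
  by exists (fun _ => x0); split.
have [p [hp1 hp2]] := IH (ltnW kn).
have [u [hu [[x hux] hu0]]] := vanish hind hL (fun j : 'I_k => p j) kn.
have nc : forall j, (j < k)%N -> ~ conn A x (p j) /\ ~ conn A (p j) x.
  move=> j hj; have h0 := hu0 (Ordinal hj).
  have nc1 := not_conn_zero hu hux h0.
  by split => // c; apply: nc1; apply: conn_sym.
exists (fun i => if (i < k)%N then p i else x); split.
  move=> i j hi hj hij.
  case: (ltnP i k) => ik; case: (ltnP j k) => jk.
  - exact: hp1.
  - exact: (nc i ik).2.
  - exact: (nc j jk).1.
  - exfalso; apply: hij; lia.
move=> i hi; case: (ltnP i k) => ik; first exact: hp2.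
by exists u.
Qed.


Lemma e_exists (X : Type) (A : X -> X -> Prop) n (p : nat -> X) :
  (forall x y, A x y -> A y x) ->
  (forall i, (i < n)%N -> exists v, Lsp A v /\ v (p i) != 0) ->
  exists e : nat -> X -> R, forall i, (i < n)%N ->
    Lsp A (e i) /\ e i (p i) = 1 /\ forall y, ~ conn A (p i) y -> e i y = 0.
Proof.
move=> As hp2.
have hv : forall i, exists v : X -> R, (i < n)%N -> Lsp A v /\ v (p i) != 0.
  move=> i; case: (ltnP i n) => hi; last by exists (fun _ => 0).
  by have [v hv] := hp2 i hi; exists v.
have [v hvv] := choice hv.
exists (fun i y => cmask A (p i) (v i) y / v i (p i)) => i hi.
have [hL hnz] := hvv i hi; split; last split.
- by move=> x y hxy; rewrite -mulrDl (cmask_L _ As hL) // mul0r.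
- by rewrite cmask_in ?divff //; apply: conn_refl.
- by move=> y hy; rewrite cmask_out // mul0r.
Qed.

Lemma cover (X : Type) (A : X -> X -> Prop) n (b : 'I_n -> X -> R)
  (p : nat -> X) (e : nat -> X -> R) :
  (forall u, Lsp A u -> exists c : 'I_n -> R, forall x, u x = \sum_(i < n) c i * b i x) ->
  (forall x y, A x y -> A y x) ->
  (forall i j, (i < n)%N -> (j < n)%N -> i <> j -> ~ conn A (p i) (p j)) ->
  (forall i, (i < n)%N ->
    Lsp A (e i) /\ e i (p i) = 1 /\ forall y, ~ conn A (p i) y -> e i y = 0) ->
  forall x u, Lsp A u -> u x != 0 -> exists k, (k < n)%N /\ conn A (p k) x.
Proof.
move=> hL' As hp1 he x u hu hux.
apply: contrapT => Hn.
have Hnot : forall k, (k < n)%N -> ~ conn A (p k) x.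
  by move=> k hk c; apply: Hn; exists k.
pose w := fun j : 'I_n.+1 => if (j < n)%N then e j else cmask A x u.
have hw : forall j, Lsp A (w j).
  move=> j; rewrite /w; case: ifP => hj; first exact: (he j hj).1.
  exact: cmask_L.
have [a [[j0 hj0] hsum]] := dep hL' hw.
suff : a j0 = 0 by move/eqP; rewrite (negbTE hj0).
case: (ltnP j0 n) => jn.
  have := hsum (p j0); rewrite (bigD1 j0) //= big1 ?addr0.
    by rewrite /w jn (he j0 jn).2.1 mulr1.
  move=> j hj; rewrite /w; case: ifP => hjn.
    rewrite (he j hjn).2.2 ?mulr0 //; apply: hp1 => // eq.
    by move/eqP: hj; apply; apply: val_inj.
  rewrite cmask_out ?mulr0 // => c; apply: (Hnot j0 jn).
  exact: conn_sym.
have := hsum x; rewrite (bigD1 j0) //= big1 ?addr0.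
  rewrite /w ltnNge jn /= cmask_in; last exact: conn_refl.
  by move/eqP; rewrite mulf_eq0 (negbTE hux) orbF => /eqP.
move=> j hj; rewrite /w; case: ifP => hjn.
  by rewrite (he j hjn).2.2 ?mulr0 //; apply: Hnot.
exfalso; move/eqP: hj; apply; apply: val_inj => /=.
have := ltn_ord j; have := ltn_ord j0; move/negbT: hjn; lia.
Qed.

Lemma ev_struct (X : Type) (A : X -> X -> Prop) n (b : 'I_n -> X -> R)
  (p : nat -> X) (e : nat -> X -> R) :
  (forall u, Lsp A u -> exists c : 'I_n -> R, forall x, u x = \sum_(i < n) c i * b i x) ->
  (forall x y, A x y -> A y x) ->
  (forall i j, (i < n)%N -> (j < n)%N -> i <> j -> ~ conn A (p i) (p j)) ->
  (forall i, (i < n)%N ->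
    Lsp A (e i) /\ e i (p i) = 1 /\ forall y, ~ conn A (p i) y -> e i y = 0) ->
  forall x, (exists k, (k < n)%N /\ exists s : R, (s = 1 \/ s = -1) /\
               forall u, Lsp A u -> u x = s * u (p k)) \/
            (forall u, Lsp A u -> u x = 0).
Proof.
move=> hL' As hp1 he x.
case: (pselect (exists u, Lsp A u /\ u x != 0)) => [[u [hu hux]]|hno].
  have [k [hk c]] := cover hL' As hp1 he hu hux.
  by left; exists k; split => //; apply: conn_sign.
right => u hu; case: (eqVneq (u x) 0) => // h.
by exfalso; apply: hno; exists u.
Qed.


Theorem lemma4p1 (X : Type) (d : X -> X -> R) (A : X -> X -> Prop) (n : nat) :
  is_metric d -> in_scrA d A -> (1 <= n)%N -> rk_eq d A n ->
  (forall g h, HA d A g -> HA d A h -> exists M : R, forall x, `|g x - h x| <= M) /\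
  is_metric_on (HA d A) (@supdist X) /\
  (exists F : (X -> R) -> ('I_n -> R),
     affine_isometry_onto (HA d A) (@supdist X) F) /\
  injective_metric (HA d A) (@supdist X).
Proof.
move=> hd [f [_ hA]] n1 [h0 [b [hind hchar]]].
have As : forall x y, A x y -> A y x.
  move=> x y; rewrite hA /Aset => h.
  by rewrite addrC h; apply: (hd.2.2.1 x y I I).
clear hA f.
have hh0 : HA d A h0.
  apply/hchar; exists (fun _ => 0) => x.
  by rewrite big1 ?addr0 // => i _; rewrite mul0r.
have HA_Lsp : forall g h, HA d A g -> HA d A h -> Lsp A (fun x => g x - h x).
  move=> g h hg hh x y hxy; have := hg x y hxy; have := hh x y hxy; lra.
have HA_add : forall g u, HA d A g -> Lsp A u -> HA d A (fun x => g x + u x).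
  move=> g u hg hu x y hxy; have := hg x y hxy; have := hu x y hxy; lra.
have hL : forall c : 'I_n -> R, Lsp A (fun x => \sum_(i < n) c i * b i x).
  move=> c x y hxy.
  have hg : HA d A (fun x => h0 x + \sum_(i < n) c i * b i x).
    by apply/hchar; exists c.
  have := hg x y hxy; have := hh0 x y hxy; lra.
have hL' : forall u, Lsp A u ->
    exists c : 'I_n -> R, forall x, u x = \sum_(i < n) c i * b i x.
  move=> u hu; have [c hc] := (hchar _).1 (HA_add _ _ hh0 hu).
  by exists c => x; have := hc x; lra.
have [x0 _] : exists x0 : X, True.
  apply: contrapT => hne.
  have := hind (fun _ => 1) (fun x => ltac:(exfalso; apply: hne; exists x; done)) (Ordinal n1).
  by move/eqP; rewrite oner_eq0.
have [p [hp1 hp2]] := greedy hind hL As x0 (leqnn n).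
have [e he] := e_exists As hp2.
have ev := ev_struct hL' As hp1 he.
pose mm := fun u : X -> R => (\big[Num.max/0]_(k < n) `|u (p k)| : R).
have mm_ge0 : forall u, 0 <= mm u.
  move=> u; rewrite /mm; elim/big_ind: _ => //.
  by move=> a c ha hc; rewrite le_max ha.
have mm_ge : forall u (k : 'I_n), `|u (p k)| <= mm u.
  move=> u k; rewrite /mm (bigD1 k) //= le_max lexx //.
have mm_le : forall u M, 0 <= M -> (forall k : 'I_n, `|u (p k)| <= M) -> mm u <= M.
  move=> u M hM hk; rewrite /mm; elim/big_ind: _ => //.
  by move=> a c ha hc; rewrite ge_max ha.
have bnd : forall u, Lsp A u -> forall x, `|u x| <= mm u.
  move=> u hu x; case: (ev x) => [[k [hk [s [hs hsu]]]]|h0u].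
    rewrite hsu // normrM; case: hs => ->; rewrite ?normrN1 ?normr1 mul1r;
    exact: (mm_ge u (Ordinal hk)).
  by rewrite h0u // normr0.
have sup_eq : forall g h, HA d A g -> HA d A h ->
    supdist g h = mm (fun x => g x - h x).
  move=> g h hg hh; rewrite /supdist.
  set S := (Y in sup Y).
  have hu := HA_Lsp _ _ hg hh.
  have neS : (S !=set0)%classic by exists `|g x0 - h x0|; exists x0.
  have ubS : ubound S (mm (fun x => g x - h x)).
    by move=> y [x _ <-]; apply: (bnd _ hu).
  have hsS : has_sup S by split => //; exists (mm (fun x => g x - h x)).
  apply/eqP; rewrite eq_le; apply/andP; split; first exact: ge_sup.
  apply: mm_le.
    apply: le_trans (normr_ge0 (g x0 - h x0)) _.
    by apply: sup_upper_bound => //; exists x0.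
  by move=> k; apply: sup_upper_bound => //; exists (p k).
have elt : forall g h x, HA d A g -> HA d A h -> `|g x - h x| <= supdist g h.
  by move=> g h x hg hh; rewrite sup_eq //; apply: bnd; apply: HA_Lsp.
have sup_le : forall (g h : X -> R) (M : R), (forall x, `|g x - h x| <= M) -> supdist g h <= M.
  move=> g h M hM; rewrite /supdist; apply: ge_sup; first by exists `|g x0 - h x0|; exists x0.
  by move=> y [x _ <-]; apply: hM.
split.
  move=> g h hg hh; exists (mm (fun x => g x - h x)); exact: bnd (HA_Lsp _ _ hg hh).
have hmetric : is_metric_on (HA d A) (@supdist X).
  split; [|split; [|split]].
  - move=> g h hg hh; exact: le_trans (normr_ge0 (g x0 - h x0)) (elt _ _ _ hg hh).
  - move=> g h hg hh; split => [hz|<-].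
      apply: funext => x; apply/eqP; rewrite -subr_eq0 -normr_le0 -hz; exact: elt.
    apply/eqP; rewrite eq_le; apply/andP; split.
      by apply: sup_le => x; rewrite subrr normr0.
    exact: le_trans (normr_ge0 (g x0 - g x0)) (elt _ _ _ hg hg).
  - move=> g h hg hh; apply/eqP; rewrite eq_le; apply/andP; split;
      apply: sup_le => x; rewrite distrC; exact: elt.
  - move=> g h k hg hh hk; apply: sup_le => x.
    apply: le_trans (ler_distD (h x) _ _) _; apply: lerD; exact: elt.
split => //.
pose G := fun (t : 'I_n -> R) x => h0 x + \sum_(k < n) t k * e k x.
have heo : forall k : 'I_n, Lsp A (e k) := fun k => (he k (ltn_ord k)).1.
have G_HA : forall t, HA d A (G t).
  by move=> t; apply: HA_add => //; apply: (Lsp_sum t heo).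
have G_eval : forall t (k : 'I_n), G t (p k) = h0 (p k) + t k.
  move=> t k; rewrite /G (bigD1 k) //= (he k (ltn_ord k)).2.1 mulr1.
  rewrite big1 ?addr0 // => j hj.
  rewrite (he j (ltn_ord j)).2.2 ?mulr0 //; apply: hp1 => // eq.
  by move/eqP: hj; apply; apply: val_inj.
pose F := fun (g : X -> R) (k : 'I_n) => g (p k) - h0 (p k).
have FG : forall t, F (G t) = t.
  by move=> t; apply: funext => k; rewrite /F G_eval; ring.
have GF : forall g, HA d A g -> G (F g) = g.
  move=> g hg; apply: funext => x.
  have hu := HA_Lsp _ _ (G_HA (F g)) hg.
  have hz : forall k : 'I_n, G (F g) (p k) - g (p k) = 0.
    by move=> k; rewrite G_eval /F; ring.
  case: (ev x) => [[k [hk [s [_ hsu]]]]|hz0].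
    have hzk := hz (Ordinal hk); rewrite /= in hzk.
    by have := hsu _ hu; rewrite /= hzk mulr0 => /eqP; rewrite subr_eq0 => /eqP.
  by have := hz0 _ hu; rewrite /= => /eqP; rewrite subr_eq0 => /eqP.
have iso : forall g h, HA d A g -> HA d A h -> linf_dist (F g) (F h) = supdist g h.
  move=> g h hg hh; rewrite sup_eq // /linf_dist /mm; apply: eq_bigr => k _.
  by have -> : F g k - F h k = g (p k) - h (p k) by rewrite /F; ring.
split.
  exists F; split; [|split].
  - by move=> g h t _ _; apply: funext => k; rewrite /F; ring.
  - exact: iso.
  - by move=> v; exists (G v); split; [exact: G_HA | exact: FG].
move=> Y dY Z phi hY hphi hlip.
have dY0 : forall y y', 0 <= dY y y' := fun y y' => hY.1 y y' I I.
have dYrefl : forall y, dY y y = 0 := fun y => (hY.2.1 y y I I).2 erefl.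
have dYsym : forall y y', dY y y' = dY y' y := fun y y' => hY.2.2.1 y y' I I.
have dYtri : forall y y' y'', dY y y'' <= dY y y' + dY y' y'' :=
  fun y y' y'' => hY.2.2.2 y y' y'' I I I.
case: (pselect (exists z, Z z)) => [[z0 hz0]|hno]; last first.
  exists (fun _ => h0); split => //; split.
    by move=> y y'; apply: sup_le => x; rewrite subrr normr0; exact: dY0.
  by move=> z hz; exfalso; apply: hno; exists z.
pose phk := fun (k : nat) z => phi z (p k) - h0 (p k).
have hphk : forall k z z', Z z -> Z z' -> `|phk k z - phk k z'| <= dY z z'.
  move=> k z z' hz hz'.
  have -> : phk k z - phk k z' = phi z (p k) - phi z' (p k) by rewrite /phk; ring.
  exact: le_trans (elt _ _ _ (hphi _ hz) (hphi _ hz')) (hlip _ _ hz hz').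
pose T := fun k y => [set phk k z + dY z y | z in Z]%classic.
pose psk := fun k y => inf (T k y).
have neT : forall k y, (T k y !=set0)%classic.
  by move=> k y; exists (phk k z0 + dY z0 y); exists z0.
have lbT : forall k y, has_lbound (T k y).
  move=> k y; exists (phk k z0 - dY y z0) => w [z hz <-].
  have := hphk k z z0 hz hz0; rewrite ler_norml => /andP [h1 _].
  have := dYtri z y z0; lra.
have psk_le : forall k y z, Z z -> psk k y <= phk k z + dY z y.
  by move=> k y z hz; rewrite /psk; apply: (ge_inf (lbT k y)); exists z.
have psk_ge : forall k y c, (forall z, Z z -> c <= phk k z + dY z y) -> c <= psk k y.
  by move=> k y c hc; rewrite /psk; apply: (lb_le_inf (neT k y)) => w [z hz <-]; exact: hc.
have psk_lip : forall k y y', psk k y - psk k y' <= dY y y'.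
  move=> k y y'; have : psk k y - dY y' y <= psk k y'.
    by apply: psk_ge => z hz; have := psk_le k y z hz; have := dYtri z y' y; lra.
  rewrite (dYsym y y'); lra.
have psk_ext : forall k z, Z z -> psk k z = phk k z.
  move=> k z hz; apply/eqP; rewrite eq_le; apply/andP; split.
    by have := psk_le k z z hz; rewrite dYrefl addr0.
  apply: psk_ge => z' hz'; have := hphk k z z' hz hz'.
  rewrite ler_norml => /andP [_ h2].
  rewrite (dYsym z' z); lra.
exists (fun y => G (fun k : 'I_n => psk k y)); split; first by move=> y; exact: G_HA.
split.
  move=> y y'; rewrite sup_eq; try exact: G_HA.
  apply: mm_le; first exact: dY0.
  move=> k; rewrite /= !G_eval.
  have -> : h0 (p k) + psk k y - (h0 (p k) + psk k y') = psk k y - psk k y' by ring.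
  rewrite ler_norml; apply/andP; split; last exact: psk_lip.
  have := psk_lip k y' y; rewrite dYsym; lra.
move=> z hz; rewrite -(GF _ (hphi _ hz)); congr G; apply: funext => k.
by rewrite psk_ext.
Qed.
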